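(* Consider the two-stage cooperative cellular/D2D recovery model described in the context, with lossless links in the second stage. For any network coding scheme used in the second stage, the packet completion time satisfies \[ T \geq \left\lceil \max\Big(|\mathcal{M}_c|,\ \tfrac{1}{2}\max_{n \in \mathcal{N}} |\mathcal{W}_n|\Big) \right\rceil . \]
   Context: Model: a set $\mathcal{N}$ of $N\ge 2$ cooperating mobile devices want a common finite set $\mathcal{M}$ of packets. After a lossy first-stage cellular broadcast, device $n$ holds its Has set $\mathcal{H}_n\subseteq\mathcal{M}$ and misses its Wants set $\mathcal{W}_n=\mathcal{M}\setminus\mathcal{H}_n$; every packet of $\mathcal{M}$ is wanted by some device; $\mathcal{M}_c=\bigcap_{n\in\mathcal{N}}\mathcal{W}_n$. In the second stage time is slotted; in each slot the source (holding all packets) may broadcast one coded packet over cellular links to all devices, and simultaneously one device may broadcast over D2D links to all other devices one coded packet formed from packets it holds; all second-stage transmissions are received without loss. The packet completion time $T$ is the number of second-stage slots until every device has decoded all packets in its Wants set. *)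

(* Defs.v *)
From mathcomp Require Import all_boot all_order all_algebra.
Set Implicit Arguments. Unset Strict Implicit. Unset Printing Implicit Defensive.

Section Model.
(* N : devices, P : the packet set M, A : packet alphabet (packet contents). *)
Variables (N P A : finType) (H : N -> {set P}).

Definition Wants (n : N) : {set P} := ~: H n.
Definition Mc : {set P} := \bigcap_(n : N) Wants n.

Definition content := {ffun P -> A}.

Definition agree_on (S : {set P}) (x y : content) : Prop :=
  forall p, p \in S -> x p = y p.

(* A (general, possibly nonlinear) second-stage network coding scheme.
   Slots are numbered 0,1,2,...  In slot t:
   - the source broadcasts the coded packet [src t x] (a function of all packets),
   - device [sched t] (if any) broadcasts the coded packet [d2d t x]. *)
Record scheme := Scheme {
  sched : nat -> option N;
  src : nat -> content -> A;
  d2d : nat -> content -> A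
}.

Definition received (S : scheme) (n : N) (s : nat) (x : content) : A * option A :=
  (src S s x,
   match sched S s with
   | Some m => if m != n then Some (d2d S s x) else None
   | None => None
   end).

Definition same_view (S : scheme) (n : N) (t : nat) (x y : content) : Prop :=
  agree_on (H n) x y /\ forall s, s < t -> received S n s x = received S n s y.

(* Admissibility: a D2D transmission in slot t by device n is formed only from
   what n knows at that time (its Has set and everything received before). *)
Definition admissible (S : scheme) : Prop :=
  forall t n, sched S t = Some n ->
    forall x y, same_view S n t x y -> d2d S t x = d2d S t y.

Definition decoded (S : scheme) (n : N) (t : nat) : Prop :=
  forall x y, same_view S n t x y -> agree_on (Wants n) x y.

Definition completed (S : scheme) (t : nat) : Prop := forall n, decoded S n t.

End Model.

(* Main.v *)
Require Import Defs.
From mathcomp Require Import all_boot all_order all_algebra.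
Import Order.TTheory GRing.Theory Num.Theory.

Lemma count_inj (P A B : finType) (S : {set P}) (a0 : A) (k : nat)
  (V : content P A -> {ffun 'I_k -> B}) :
  (forall x y : content P A, (forall p, p \notin S -> x p = y p) -> V x = V y -> x = y) ->
  #|A| ^ #|S| <= #|B| ^ k.
Proof.
move=> HV.
pose sT := {p : P | p \in S}.
pose e (w : {ffun sT -> A}) : content P A :=
  [ffun p => match insub p with Some q => w q | None => a0 end].
have einj : injective (fun w => V (e w)).
  move=> w1 w2 /= Heq.
  have Hx : e w1 = e w2.
    apply: HV => //= p pS; rewrite /e !ffunE insubF //; exact/negbTE.
  apply/ffunP => q.
  have := congr1 (fun f : content P A => f (val q)) Hx.
  by rewrite /e !ffunE valK.
have := leq_card _ einj.
by rewrite !card_ffun card_ord card_sig.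
Qed.

Theorem corollary1 (N P A : finType) (H : N -> {set P})
  (hN : 2 <= #|N|)
  (hA : 2 <= #|A|)
  (hwant : forall p : P, exists n : N, p \in Wants H n)
  (S : scheme N P A) (hS : admissible H S) (T : nat)
  (hT : completed H S T) :
  (Num.ceil (Num.max (#|Mc H|%:R : rat)
                     ((\max_(n : N) #|Wants H n|)%:R / 2)) <= T%:Z)%R.
Proof.
have [a0 _] : exists a0 : A, True.
  have : 0 < #|A| by apply: leq_trans hA.
  by case/card_gt0P => a _; exists a.
have h1 : #|Mc H| <= T.
  case: (set_0Vmem (Mc H)) => [->|[p0 _]]; first by rewrite cards0.
  case: (hwant p0) => n0 _.
  rewrite -(@leq_exp2l #|A|) //.
  apply: (@count_inj P A A (Mc H) a0 T
            (fun x => [ffun s : 'I_T => src S s x])) => x y Hout HV.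
  have Hsrc : forall s, s < T -> src S s x = src S s y.
    move=> s sT; have := congr1 (fun f : {ffun _ -> _} => f (Ordinal sT)) HV.
    by rewrite !ffunE.
  have HH : forall m, agree_on (H m) x y.
    move=> m p pH; apply: Hout; apply/bigcapP => /= Hc.
    by have := Hc m isT; rewrite /Wants in_setC pH.
  have Hview : forall t, t <= T -> forall m, same_view H S m t x y.
    elim=> [|t IH] tT m.
      by split => // s.
    split => // s; rewrite ltnS leq_eqVlt => /orP [/eqP ->|st]; last first.
      by case: (IH (ltnW tT) m) => _; apply.
    rewrite /received Hsrc //.
    case E: (sched S t) => [m'|] //.
    by rewrite (hS t m' E x y (IH (ltnW tT) m')).
  apply/ffunP => p.
  case: (boolP (p \in Mc H)) => pM; last exact: Hout.
  apply: (hT n0 x y (Hview T (leqnn T) n0)).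
  by move/bigcapP: pM; apply.
have h2 : forall n, #|Wants H n| <= T.*2.
  move=> n.
  rewrite -(@leq_exp2l #|A|) // -mul2n expnM.
  have -> : (#|A| ^ 2 = #|{: A * A}|)%N by rewrite card_prod mulnn.
  apply: (@count_inj P A (A * A)%type (Wants H n) a0 T
            (fun x => [ffun s : 'I_T => (src S s x, d2d S s x)])) => x y Hout HV.
  have Hsv : same_view H S n T x y.
    split.
      by move=> p pH; apply: Hout; rewrite /Wants in_setC pH.
    move=> s sT; have := congr1 (fun f : {ffun _ -> _} => f (Ordinal sT)) HV.
    rewrite !ffunE => -[e1 e2].
    by rewrite /received e1 e2.
  apply/ffunP => p.
  case: (boolP (p \in Wants H n)) => pM; last exact: Hout.
  exact: (hT n x y Hsv).
rewrite ceil_le_int ge_max; apply/andP; split.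
  by rewrite pmulrn ler_nat.
rewrite pmulrn ler_pdivrMr // -natrM ler_nat muln2.
by apply/bigmax_leqP => n _; apply: h2.
Qed.
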